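(* Let $K,G:[0,\infty)\to\mathbb{R}$ be continuous, let $f$ solve $f''+Kf=0$ with $f>0$ on $(0,\infty)$ and $\int_1^\infty f(t)^{-2}dt<\infty$, and let $m$ solve $m''+Gm=0$ with $m(0)=f(0)$, $m'(0)=f'(0)$. Suppose the support of $G-K$ is contained in a bounded interval $[a,b]\subset[1,\infty)$. Set $$C(f,a,b):=\Big(\int_a^\infty f(t)^{-2}dt\Big)\cdot\|f^2|_{[a,b]}\|_2>0.$$ If $C(f,a,b)\,\|G-K\|_2<1$, then $$\alpha(m)\le\frac{C(f,a,b)\,\|G-K\|_2}{1-C(f,a,b)\,\|G-K\|_2}.$$
   Context: Notation: $\|G-K\|_2:=\sqrt{\int_0^\infty|G-K|^2dt}$; $\|f^2|_{[a,b]}\|_2:=\sqrt{\int_a^b f(t)^4dt}$; $\sigma(t):=m(t)/f(t)-1$ for $t>0$; $\alpha(m):=\sup_{t>0}|\sigma(t)|$. *)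

(* Defs.v *)
From Stdlib Require Import Reals Lra.
Open Scope R_scope.

Definition continuous_on_nonneg (K : R -> R) : Prop :=
  forall t, 0 <= t -> forall eps, 0 < eps -> exists delta, 0 < delta /\
    forall s, 0 <= s -> Rabs (s - t) < delta -> Rabs (K s - K t) < eps.

Definition deriv_on_nonneg (f df : R -> R) : Prop :=
  forall t, 0 <= t -> forall eps, 0 < eps -> exists delta, 0 < delta /\
    forall h, h <> 0 -> 0 <= t + h -> Rabs h < delta ->
      Rabs ((f (t + h) - f t) / h - df t) < eps.

Definition solves_ode (K f df : R -> R) : Prop :=
  deriv_on_nonneg f df /\ deriv_on_nonneg df (fun t => - K t * f t).

Definition is_integral (g : R -> R) (a b I : R) : Prop :=
  exists pr : Riemann_integrable g a b, RiemannInt pr = I.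

Definition improper_int (g : R -> R) (a L : R) : Prop :=
  (forall x, a <= x -> inhabited (Riemann_integrable g a x)) /\
  forall eps, 0 < eps -> exists N, forall x (pr : Riemann_integrable g a x),
    a <= x -> N <= x -> Rabs (RiemannInt pr - L) < eps.

Definition sigma_mf (m f : R -> R) (t : R) : R := m t / f t - 1.

(* Main.v *)
Require Import Defs.
From Stdlib Require Import Reals Lra Psatz.
Open Scope R_scope.

Lemma D_eq f x l l' : derivable_pt_lim f x l -> l = l' -> derivable_pt_lim f x l'.
Proof. intros H ->; exact H. Qed.

Lemma D_mult f g x lf lg : derivable_pt_lim f x lf -> derivable_pt_lim g x lg ->
  derivable_pt_lim (fun y => f y * g y) x (lf * g x + f x * lg).
Proof. intros; apply (derivable_pt_lim_mult f g); auto. Qed.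
Lemma D_plus f g x lf lg : derivable_pt_lim f x lf -> derivable_pt_lim g x lg ->
  derivable_pt_lim (fun y => f y + g y) x (lf + lg).
Proof. intros; apply (derivable_pt_lim_plus f g); auto. Qed.
Lemma D_minus f g x lf lg : derivable_pt_lim f x lf -> derivable_pt_lim g x lg ->
  derivable_pt_lim (fun y => f y - g y) x (lf - lg).
Proof. intros; apply (derivable_pt_lim_minus f g); auto. Qed.
Lemma D_const c x : derivable_pt_lim (fun _ => c) x 0.
Proof. apply (derivable_pt_lim_const c x). Qed.
Lemma D_scal c f x l : derivable_pt_lim f x l -> derivable_pt_lim (fun y => c * f y) x (c * l).
Proof. intros; apply (derivable_pt_lim_scal f c x l); auto. Qed.
Lemma D_div f g x lf lg : derivable_pt_lim f x lf -> derivable_pt_lim g x lg -> g x <> 0 ->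
  derivable_pt_lim (fun y => f y / g y) x ((lf * g x - lg * f x) / Rsqr (g x)).
Proof. intros; apply (derivable_pt_lim_div f g); auto. Qed.
Lemma D_explin c x : derivable_pt_lim (fun y => exp (c * y)) x (c * exp (c * x)).
Proof.
  apply D_eq with (exp (c*x) * (c * 1)).
  - apply (derivable_pt_lim_comp (fun y => c * y) exp x (c*1) (exp (c*x))).
    + apply D_scal. apply derivable_pt_lim_id.
    + apply derivable_pt_lim_exp.
  - ring.
Qed.
Lemma D_cont f x l : derivable_pt_lim f x l -> continuity_pt f x.
Proof. intros H. apply derivable_continuous_pt. exists l; exact H. Qed.

Lemma nondecr (h h' : R -> R) c d : c <= d ->
  (forall x, c < x < d -> derivable_pt_lim h x (h' x)) ->
  (forall x, c < x < d -> 0 <= h' x) ->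
  (forall x, c <= x <= d -> continuity_pt h x) -> h c <= h d.
Proof.
  intros Hcd Hd Hpos Hc.
  destruct (Rle_lt_or_eq_dec c d Hcd) as [Hlt|Heq]; [|subst; lra].
  pose (pr1 := fun x (P : c < x < d) => exist (fun l => derivable_pt_lim h x l) (h' x) (Hd x P)).
  pose (pr2 := fun x (_ : c < x < d) => derivable_pt_id x).
  destruct (MVT h id c d pr1 pr2 Hlt Hc) as [x [P E]].
  - intros; apply derivable_continuous_pt, derivable_pt_id.
  - rewrite derive_pt_id in E. unfold pr1, derive_pt in E; simpl in E.
    unfold id in E. specialize (Hpos x P). nra.
Qed.

Lemma eps_cont F t : 0 <= t ->
  (forall eps, 0 < eps -> exists delta, 0 < delta /\ forall s, 0 <= s -> Rabs (s - t) < delta -> Rabs (F s - F t) < eps) ->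
  continuity_pt (fun s => F (Rmax 0 s)) t.
Proof.
  intros Ht H eps Heps. destruct (H eps Heps) as [d [Hd Hs]].
  exists d; split; [exact Hd|]. intros x [_ Hx]. simpl in *. unfold R_dist in *.
  rewrite (Rmax_right 0 t Ht). apply Hs.
  - apply Rmax_l.
  - unfold Rmax; destruct (Rle_dec 0 x).
    + exact Hx.
    + apply Rle_lt_trans with (2:=Hx). rewrite !Rabs_left1; lra.
Qed.

Lemma deriv_eps F dF t : deriv_on_nonneg F dF -> 0 <= t ->
  forall eps, 0 < eps -> exists delta, 0 < delta /\ forall s, 0 <= s -> Rabs (s - t) < delta -> Rabs (F s - F t) < eps.
Proof.
  intros HD Ht eps Heps. destruct (HD t Ht 1 Rlt_0_1) as [d [Hd Hh]].
  exists (Rmin d (eps / (Rabs (dF t) + 1))). split.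
  { apply Rmin_pos; auto. apply Rdiv_lt_0_compat; auto. pose proof (Rabs_pos (dF t)); lra. }
  intros s Hs Hst. destruct (Req_dec s t) as [->|Hne].
  { rewrite Rminus_diag, Rabs_R0; auto. }
  assert (Hh0 : s - t <> 0) by lra.
  assert (E : t + (s - t) = s) by ring.
  specialize (Hh (s - t) Hh0). rewrite E in Hh. specialize (Hh Hs).
  assert (Hlt : Rabs (s - t) < d) by (apply Rlt_le_trans with (1:=Hst); apply Rmin_l).
  specialize (Hh Hlt).
  assert (Hlt2 : Rabs (s - t) < eps / (Rabs (dF t) + 1)) by (apply Rlt_le_trans with (1:=Hst); apply Rmin_r).
  replace (F s - F t) with ((s - t) * ((F s - F t) / (s - t))) by (field; auto).
  rewrite Rabs_mult.
  assert (Hq : Rabs ((F s - F t) / (s - t)) < Rabs (dF t) + 1).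
  { pose proof (Rabs_triang_inv ((F s - F t) / (s - t)) (dF t)). lra. }
  pose proof (Rabs_pos (dF t)). pose proof (Rabs_pos ((F s - F t) / (s - t))).
  assert (Rabs (s - t) * (Rabs (dF t) + 1) < eps).
  { apply Rmult_lt_reg_r with (/ (Rabs (dF t) + 1)). apply Rinv_0_lt_compat; lra.
    rewrite Rmult_assoc, Rinv_r by lra. unfold Rdiv in Hlt2. lra. }
  pose proof (Rabs_pos (s - t)). nra.
Qed.

Lemma deriv_clamp F dF t : deriv_on_nonneg F dF -> 0 < t ->
  derivable_pt_lim (fun s => F (Rmax 0 s)) t (dF t).
Proof.
  intros HD Ht eps Heps. destruct (HD t (Rlt_le _ _ Ht) eps Heps) as [d [Hd Hh]].
  assert (Hp : 0 < Rmin d t) by (apply Rmin_pos; auto).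
  exists (mkposreal _ Hp). intros h Hh0 Hhl. simpl in Hhl.
  assert (Hl1 : Rabs h < d) by (apply Rlt_le_trans with (1:=Hhl); apply Rmin_l).
  assert (Hl2 : Rabs h < t) by (apply Rlt_le_trans with (1:=Hhl); apply Rmin_r).
  assert (0 <= t + h) by (destruct (Rabs_def2 _ _ Hl2); lra).
  rewrite (Rmax_right 0 (t+h)) by auto. rewrite (Rmax_right 0 t) by lra.
  apply Hh; auto.
Qed.

Lemma int_nonneg F a b (pr : Riemann_integrable F a b) : a <= b ->
  (forall x, a < x < b -> 0 <= F x) -> 0 <= RiemannInt pr.
Proof.
  intros Hab Hp. pose proof (RiemannInt_P15 (RiemannInt_P14 a b 0)) as E.
  rewrite Rmult_0_l in E. rewrite <- E. apply RiemannInt_P19; auto.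
Qed.

Lemma improper_ge F c L x (pr : Riemann_integrable F c x) :
  improper_int F c L -> (forall s, c < s -> 0 <= F s) -> c <= x -> RiemannInt pr <= L.
Proof.
  intros [Hin Hlim] Hp Hcx.
  destruct (Rle_lt_dec (RiemannInt pr) L) as [|Hlt]; auto. exfalso.
  destruct (Hlim (RiemannInt pr - L)) as [N HN]; [lra|].
  set (y := Rmax x N).
  assert (Hxy : x <= y) by apply Rmax_l. assert (HNy : N <= y) by apply Rmax_r.
  destruct (Hin y ltac:(lra)) as [pry].
  pose proof (RiemannInt_P23 pry (conj Hcx Hxy)) as prxy.
  pose proof (RiemannInt_P26 pr prxy pry) as E.
  assert (0 <= RiemannInt prxy) by (apply int_nonneg; auto; intros; apply Hp; lra).
  specialize (HN y pry ltac:(lra) HNy).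
  destruct (Rabs_def2 _ _ HN). lra.
Qed.

Lemma cs_alg A B D : 0 <= A -> 0 <= D -> (forall l, 2 * l * B <= D + l^2 * A) ->
  B <= sqrt A * sqrt D.
Proof.
  intros HA HD H.
  assert (Hs : 0 <= sqrt A * sqrt D) by (apply Rmult_le_pos; apply sqrt_pos).
  destruct (Rle_lt_dec B 0) as [|HB]; [lra|].
  destruct (Rle_lt_or_eq_dec 0 A HA) as [HAp|HA0].
  - specialize (H (B / A)).
    assert (B^2 <= A * D).
    { assert (E : 2 * (B/A) * B = 2 * B^2 / A) by (field; lra).
      assert (E2 : (B/A)^2 * A = B^2 / A) by (field; lra).
      rewrite E, E2 in H.
      assert (B^2 / A <= D) by lra.
      apply Rmult_le_reg_r with (/A). apply Rinv_0_lt_compat; lra.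
      replace (A * D * / A) with D by (field; lra). exact H0. }
    rewrite <- sqrt_mult by auto.
    rewrite <- (sqrt_pow2 B) by lra. apply sqrt_le_1; try nra.
  - subst A. specialize (H ((D + 1) / (2 * B))).
    assert (E : 2 * ((D+1)/(2*B)) * B = D + 1) by (field; lra). rewrite E in H. lra.
Qed.

Lemma CS (u v : R -> R) a b (puv : Riemann_integrable (fun x => u x * v x) a b)
  (puu : Riemann_integrable (fun x => u x ^ 2) a b)
  (pvv : Riemann_integrable (fun x => v x ^ 2) a b) : a <= b ->
  RiemannInt puv <= sqrt (RiemannInt puu) * sqrt (RiemannInt pvv).
Proof.
  intros Hab. apply cs_alg.
  - apply int_nonneg; auto; intros; apply pow2_ge_0.
  - apply int_nonneg; auto; intros; apply pow2_ge_0.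
  - intros l.
    pose (pr1 := RiemannInt_P10 (l^2) pvv puu).
    pose (pr2 := RiemannInt_P10 (-2*l) pr1 puv).
    pose proof (RiemannInt_P13 pvv puu pr1) as E1.
    pose proof (RiemannInt_P13 pr1 puv pr2) as E2.
    assert (0 <= RiemannInt pr2).
    { apply int_nonneg; auto. intros x _. cbv beta. replace (v x ^ 2 + l ^ 2 * u x ^ 2 + -2 * l * (u x * v x)) with ((v x - l * u x)^2) by ring. apply pow2_ge_0. }
    lra.
Qed.

Lemma C_plus f g x : continuity_pt f x -> continuity_pt g x -> continuity_pt (fun y => f y + g y) x.
Proof. intros; apply (continuity_pt_plus f g); auto. Qed.
Lemma C_minus f g x : continuity_pt f x -> continuity_pt g x -> continuity_pt (fun y => f y - g y) x.
Proof. intros; apply (continuity_pt_minus f g); auto. Qed.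
Lemma C_mult f g x : continuity_pt f x -> continuity_pt g x -> continuity_pt (fun y => f y * g y) x.
Proof. intros; apply (continuity_pt_mult f g); auto. Qed.
Lemma C_abs f x : continuity_pt f x -> continuity_pt (fun y => Rabs (f y)) x.
Proof. intros; apply (continuity_pt_comp f Rabs); auto. apply Rcontinuity_abs. Qed.
Lemma C_const c x : continuity_pt (fun _ => c) x.
Proof. apply continuity_pt_const. intros u v; reflexivity. Qed.

Lemma prim_val f a b (h : a <= b) (pr : forall x, a <= x -> x <= b -> Riemann_integrable f a x)
  x (H1 : a <= x) (H2 : x <= b) : primitive h pr x = RiemannInt (pr x H1 H2).
Proof.
  unfold primitive. destruct (Rle_dec a x); [|contradiction].
  destruct (Rle_dec x b); [|contradiction]. apply RiemannInt_P5.
Qed.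

Lemma prim_a f a b (h : a <= b) (pr : forall x, a <= x -> x <= b -> Riemann_integrable f a x) :
  primitive h pr a = 0.
Proof. rewrite (prim_val f a b h pr a (Rle_refl a) h). apply RiemannInt_P9. Qed.

Lemma bound_alg k g f m M : 0 < f -> Rabs (m / f - 1) <= M ->
  Rabs ((k - g) * f * m) <= (1 + M) * (Rabs (g - k) * (f * f)).
Proof.
  intros Hf Hs. set (s := m / f - 1) in *.
  assert (Em : m = f * (1 + s)) by (unfold s; field; lra).
  rewrite Em. rewrite !Rabs_mult. rewrite (Rabs_minus_sym k g).
  rewrite (Rabs_right f) by lra.
  assert (Rabs (1 + s) <= 1 + M) by (pose proof (Rabs_triang 1 s); rewrite Rabs_R1 in H; lra).
  pose proof (Rabs_pos (g - k)). pose proof (Rabs_pos (1+s)).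
  replace (Rabs (g - k) * f * (f * Rabs (1 + s))) with ((Rabs (g - k) * (f * f)) * Rabs (1 + s)) by ring.
  rewrite (Rmult_comm (1 + M)). apply Rmult_le_compat_l; auto.
  apply Rmult_le_pos; auto. nra.
Qed.

Lemma C_sq g x : continuity_pt g x -> continuity_pt (fun y => g y ^ 2) x.
Proof.
  intros H. apply (continuity_pt_locally_ext (fun y => g y * g y) _ 1 x); [lra| |].
  - intros; ring.
  - apply C_mult; auto.
Qed.

Lemma abs_split z B : Rabs z <= B -> -B <= z <= B.
Proof. intros H. pose proof (Rle_abs z). pose proof (Rle_abs (-z)). rewrite Rabs_Ropp in *. lra. Qed.

Lemma deriv_clamp2 F dF t : deriv_on_nonneg F dF -> 0 < t ->
  derivable_pt_lim (fun s => F (Rmax 0 s)) t (dF (Rmax 0 t)).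
Proof. intros. rewrite (Rmax_right 0 t) by lra. apply deriv_clamp; auto. Qed.

Lemma cont_clamp F dF t : deriv_on_nonneg F dF -> 0 <= t ->
  continuity_pt (fun s => F (Rmax 0 s)) t.
Proof. intros. apply eps_cont; auto. apply deriv_eps with dF; auto. Qed.

Lemma Rmax0 t : 0 <= t -> Rmax 0 t = t.
Proof. apply Rmax_right. Qed.

Theorem lemma2p3 (K G f df m dm : R -> R) (a b Iinv Ifour Idiff : R) :
  continuous_on_nonneg K ->
  continuous_on_nonneg G ->
  solves_ode K f df ->
  (forall t, 0 < t -> 0 < f t) ->
  (exists L, improper_int (fun t => / (f t) ^ 2) 1 L) ->
  solves_ode G m dm ->
  m 0 = f 0 -> dm 0 = df 0 ->
  1 <= a -> a <= b ->
  (forall t, 0 <= t -> (t < a \/ b < t) -> G t = K t) ->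
  improper_int (fun t => / (f t) ^ 2) a Iinv ->
  is_integral (fun t => (f t) ^ 4) a b Ifour ->
  improper_int (fun t => (G t - K t) ^ 2) 0 Idiff ->
  let C := Iinv * sqrt Ifour in
  C * sqrt Idiff < 1 ->
  forall t, 0 < t ->
    Rabs (sigma_mf m f t) <= C * sqrt Idiff / (1 - C * sqrt Idiff).
Proof.
  intros HK HG [Df Ddf] fpos _ [Dm Ddm] m0 dm0 Ha1 Hab Hsupp Hinv Hfour Hdiff C HC t Ht.
  pose (fc := fun s => f (Rmax 0 s)). pose (dfc := fun s => df (Rmax 0 s)).
  pose (mc := fun s => m (Rmax 0 s)). pose (dmc := fun s => dm (Rmax 0 s)).
  pose (Kc := fun s => K (Rmax 0 s)). pose (Gc := fun s => G (Rmax 0 s)).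
  assert (Dfc : forall x, 0 < x -> derivable_pt_lim fc x (dfc x)) by (intros; apply deriv_clamp2; auto).
  assert (Ddfc : forall x, 0 < x -> derivable_pt_lim dfc x (- Kc x * fc x)) by (intros; apply (deriv_clamp2 df (fun t => - K t * f t)); auto).
  assert (Dmc : forall x, 0 < x -> derivable_pt_lim mc x (dmc x)) by (intros; apply deriv_clamp2; auto).
  assert (Ddmc : forall x, 0 < x -> derivable_pt_lim dmc x (- Gc x * mc x)) by (intros; apply (deriv_clamp2 dm (fun t => - G t * m t)); auto).
  assert (Cfc : forall x, 0 <= x -> continuity_pt fc x) by (intros; apply cont_clamp with df; auto).
  assert (Cdfc : forall x, 0 <= x -> continuity_pt dfc x) by (intros; apply cont_clamp with (fun t => - K t * f t); auto).
  assert (Cmc : forall x, 0 <= x -> continuity_pt mc x) by (intros; apply cont_clamp with dm; auto).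
  assert (Cdmc : forall x, 0 <= x -> continuity_pt dmc x) by (intros; apply cont_clamp with (fun t => - G t * m t); auto).
  assert (CKc : forall x, 0 <= x -> continuity_pt Kc x) by (intros; apply eps_cont; auto).
  assert (CGc : forall x, 0 <= x -> continuity_pt Gc x) by (intros; apply eps_cont; auto).
  assert (fcpos : forall x, 0 < x -> 0 < fc x) by (intros x Hx; unfold fc; rewrite Rmax0 by lra; apply fpos; exact Hx).
  assert (GK : forall x, 0 < x -> (x < a \/ b < x) -> Gc x = Kc x) by (intros x Hx Hx2; unfold Gc, Kc; rewrite Rmax0 by lra; apply Hsupp; auto; lra).
  assert (Hu : forall x, 0 <= x <= a -> mc x = fc x /\ dmc x = dfc x).
  { pose (u := fun s => mc s - fc s). pose (du := fun s => dmc s - dfc s).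
    assert (Du : forall x, 0 < x -> derivable_pt_lim u x (du x)) by (intros; apply D_minus; auto).
    assert (Ddu : forall x, 0 < x < a -> derivable_pt_lim du x (- Kc x * u x)).
    { intros x Hx. apply D_eq with ((- Gc x * mc x) - (- Kc x * fc x)).
      - apply D_minus; [apply Ddmc|apply Ddfc]; lra.
      - rewrite GK by lra. unfold u. ring. }
    destruct (continuity_ab_maj (fun s => Rabs (1 - Kc s)) 0 a) as [Mx [HMx _]]; [lra| |].
    { intros; apply C_abs, C_minus; [apply C_const|apply CKc; lra]. }
    set (c0 := Rabs (1 - Kc Mx)) in *.
    pose (E := fun s => u s * u s + du s * du s).
    pose (ps' := fun x => ((du x * u x + u x * du x) + ((- Kc x * u x) * du x + du x * (- Kc x * u x))) * exp (- c0 * x) + E x * (- c0 * exp (- c0 * x))).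
    assert (Dps : forall x, 0 < x < a -> derivable_pt_lim (fun s => E s * exp (- c0 * s)) x (ps' x)).
    { intros x Hx. apply (D_mult E (fun s => exp (- c0 * s))).
      - apply (D_plus (fun y => u y * u y) (fun y => du y * du y)).
        + apply (D_mult u u); apply Du; lra.
        + apply (D_mult du du); apply Ddu; lra.
      - apply D_explin. }
    intros x Hx.
    assert (Hle := nondecr (fun s => -1 * (E s * exp (- c0 * s))) (fun s => -1 * ps' s) 0 x (proj1 Hx)).
    assert (CE : forall y, 0 <= y -> continuity_pt E y).
    { intros y Hy. unfold E, u, du.
      apply C_plus; apply C_mult; apply C_minus; auto. }
    specialize (Hle ltac:(intros y Hy; apply D_scal, Dps; lra)).
    specialize (Hle ltac:(intros y Hy;
      assert (Hk : Rabs (1 - Kc y) <= c0) by (apply HMx; lra);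
      assert (Hc0 : 0 <= c0) by (unfold c0; apply Rabs_pos);
      assert (He : 0 < exp (- c0 * y)) by apply exp_pos;
      set (p := u y) in *; set (q := du y) in *; set (k := Kc y) in *;
      set (e := exp (- c0 * y)) in *;
      assert (H2 : Rabs (2 * p * q) <= p * p + q * q) by (apply Rabs_le; pose proof (Rle_0_sqr (p+q)); pose proof (Rle_0_sqr (p-q)); unfold Rsqr in *; split; nra);
      assert (H3 : 2 * p * q * (1 - k) <= c0 * (p * p + q * q)) by
        (apply Rle_trans with (Rabs (2 * p * q * (1 - k))); [apply Rle_abs|];
         rewrite Rabs_mult, Rmult_comm; apply Rmult_le_compat; auto; apply Rabs_pos);
      unfold ps'; fold p q k e; unfold E; fold p q; nra)).
    specialize (Hle ltac:(intros y Hy; apply (C_mult (fun _ => -1) (fun s => E s * exp (- c0 * s))); [apply C_const|];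
      apply (C_mult E (fun s => exp (- c0 * s))); [apply CE; lra|]; apply D_cont with (- c0 * exp (- c0 * y)); apply D_explin)).
    simpl in Hle.
    assert (E0 : E 0 = 0).
    { unfold E, u, du, mc, fc, dmc, dfc. rewrite Rmax0 by lra. rewrite m0, dm0. ring. }
    rewrite E0 in Hle.
    assert (0 < exp (- c0 * x)) by apply exp_pos.
    assert (HE : E x <= 0) by nra.
    unfold E in HE. pose proof (Rle_0_sqr (u x)). pose proof (Rle_0_sqr (du x)). unfold Rsqr in *.
    assert (u x * u x = 0) by lra. assert (du x * du x = 0) by lra.
    apply Rmult_integral in H2. apply Rmult_integral in H3.
    unfold u, du in *. split; lra.
  }

  assert (a0 : 0 < a) by lra.
  assert (gpos : forall s, a < s -> 0 <= / f s ^ 2).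
  { intros s Hs. left. apply Rinv_0_lt_compat, pow_lt, fpos. lra. }
  assert (Hinv0 : 0 <= Iinv).
  { destruct (proj1 Hinv a (Rle_refl a)) as [pra].
    pose proof (RiemannInt_P9 pra) as E0.
    pose proof (improper_ge _ _ _ _ pra Hinv gpos (Rle_refl a)). lra. }
  assert (HX0 : 0 <= C * sqrt Idiff) by (unfold C; repeat apply Rmult_le_pos; auto; apply sqrt_pos).
  set (X := C * sqrt Idiff) in *.
  unfold sigma_mf.
  replace (m t / f t - 1) with (mc t / fc t - 1) by (unfold mc, fc; rewrite Rmax0 by lra; reflexivity).
  assert (Hfin : forall M, 0 <= M -> M <= X * (1 + M) -> M <= X / (1 - X)).
  { intros M HM0 HMX. unfold Rdiv. apply Rmult_le_reg_r with (1 - X); [lra|].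
    rewrite Rmult_assoc, Rinv_l by lra. lra. }
  destruct (Rle_lt_dec t a) as [Hta|Hta].
  { destruct (Hu t (conj (Rlt_le _ _ Ht) Hta)) as [E _]. rewrite E.
    assert (fc t <> 0) by (apply Rgt_not_eq, fcpos; lra).
    replace (fc t / fc t - 1) with 0 by (field; auto). rewrite Rabs_R0.
    apply Hfin; lra. }
  set (T := Rmax t b).
  assert (HtT : t <= T) by apply Rmax_l. assert (HbT : b <= T) by apply Rmax_r.
  assert (aT : a <= T) by lra.
  pose (W := fun s => fc s * dmc s - dfc s * mc s).
  pose (gc := fun s => 1 / (fc s * fc s)).
  pose (sg := fun s => mc s / fc s - 1).
  assert (fcnz : forall x, 0 < x -> fc x <> 0) by (intros; apply Rgt_not_eq, fcpos; auto).
  assert (Dsg : forall x, 0 < x -> derivable_pt_lim sg x (W x * gc x)).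
  { intros x Hx. apply D_eq with ((dmc x * fc x - dfc x * mc x) / Rsqr (fc x) - 0).
    - apply (D_minus (fun s => mc s / fc s) (fun _ => 1)).
      + apply D_div; auto.
      + apply D_const.
    - unfold W, gc, Rsqr. field. auto. }
  assert (Csg : forall x, a <= x <= T -> continuity_pt sg x) by (intros; eapply D_cont; apply Dsg; lra).
  destruct (continuity_ab_maj (fun s => Rabs (sg s)) a T aT) as [x0 [HM Hx0]].
  { intros; apply C_abs; auto. }
  set (M := Rabs (sg x0)) in *.
  assert (M0 : 0 <= M) by apply Rabs_pos.
  assert (DW : forall x, 0 < x -> derivable_pt_lim W x ((Kc x - Gc x) * fc x * mc x)).
  { intros x Hx. apply D_eq with ((dfc x * dmc x + fc x * (- Gc x * mc x)) - ((- Kc x * fc x) * mc x + dfc x * dmc x)).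
    - apply (D_minus (fun s => fc s * dmc s) (fun s => dfc s * mc s)); apply D_mult; auto.
    - ring. }
  assert (CW : forall x, 0 < x -> continuity_pt W x) by (intros; eapply D_cont; apply DW; auto).
  assert (Wa : W a = 0).
  { destruct (Hu a (conj (Rlt_le _ _ a0) (Rle_refl a))) as [E1 E2]. unfold W. rewrite E1, E2. ring. }
  assert (sga : sg a = 0).
  { destruct (Hu a (conj (Rlt_le _ _ a0) (Rle_refl a))) as [E1 E2]. unfold sg. rewrite E1. field. auto. }
  pose (q := fun s => Rabs (Gc s - Kc s) * (fc s * fc s)).
  assert (Cq : forall x, a <= x <= b -> continuity_pt q x).
  { intros x Hx. unfold q. apply C_mult.
    - apply C_abs, C_minus; [apply CGc|apply CKc]; lra.
    - apply C_mult; apply Cfc; lra. }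
  assert (qpos : forall x, 0 <= q x) by (intros; unfold q; apply Rmult_le_pos; [apply Rabs_pos|nra]).
  pose (Qp := primitive Hab (FTC_P1 Hab Cq)).
  assert (DQ : forall x, a <= x <= b -> derivable_pt_lim Qp x (q x)) by (intros; apply RiemannInt_P28; auto).
  assert (Q0 : Qp a = 0) by apply prim_a.
  assert (Qmono : forall x, a <= x <= b -> Qp x <= Qp b).
  { intros x Hx. apply nondecr with q; try lra.
    - intros; apply DQ; lra.
    - intros; apply qpos.
    - intros; eapply D_cont; apply DQ; lra. }
  set (Qb := Qp b) in *.
  assert (Qb0 : 0 <= Qb) by (rewrite <- Q0; apply Qmono; lra).
  assert (Hbd : forall y, a <= y <= T -> Rabs ((Kc y - Gc y) * fc y * mc y) <= (1 + M) * q y).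
  { intros y Hy. apply bound_alg. apply fcpos; lra. apply (HM y Hy). }
  assert (HW1 : forall s, a <= s <= b -> Rabs (W s) <= (1 + M) * Qp s).
  { intros s Hs. apply Rabs_le. split.
    - assert (H := nondecr (fun y => (1 + M) * Qp y + W y) (fun y => (1 + M) * q y + (Kc y - Gc y) * fc y * mc y) a s (proj1 Hs)).
      simpl in H. rewrite Q0, Wa in H.
      enough ((1 + M) * 0 + 0 <= (1 + M) * Qp s + W s) by lra.
      apply H.
      + intros y Hy. apply (D_plus (fun y => (1 + M) * Qp y) W). apply D_scal, DQ; lra. apply DW; lra.
      + intros y Hy. pose proof (abs_split _ _ (Hbd y ltac:(lra))). lra.
      + intros y Hy. apply (C_plus (fun y => (1 + M) * Qp y) W). apply (C_mult (fun _ => 1 + M) Qp). apply C_const.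
        eapply D_cont; apply DQ; lra. apply CW; lra.
    - assert (H := nondecr (fun y => (1 + M) * Qp y - W y) (fun y => (1 + M) * q y - (Kc y - Gc y) * fc y * mc y) a s (proj1 Hs)).
      simpl in H. rewrite Q0, Wa in H.
      enough ((1 + M) * 0 - 0 <= (1 + M) * Qp s - W s) by lra.
      apply H.
      + intros y Hy. apply (D_minus (fun y => (1 + M) * Qp y) W). apply D_scal, DQ; lra. apply DW; lra.
      + intros y Hy. pose proof (abs_split _ _ (Hbd y ltac:(lra))). lra.
      + intros y Hy. apply (C_minus (fun y => (1 + M) * Qp y) W). apply (C_mult (fun _ => 1 + M) Qp). apply C_const.
        eapply D_cont; apply DQ; lra. apply CW; lra. }
  assert (HW2 : forall s, b <= s <= T -> W s = W b).
  { intros s Hs. apply Rle_antisym.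
    - assert (H := nondecr (fun y => -1 * W y) (fun y => -1 * ((Kc y - Gc y) * fc y * mc y)) b s (proj1 Hs)).
      simpl in H. enough (-1 * W b <= -1 * W s) by lra. apply H.
      + intros y Hy. apply D_scal, DW; lra.
      + intros y Hy. rewrite GK by lra. lra.
      + intros y Hy. apply (C_mult (fun _ => -1) W). apply C_const. apply CW; lra.
    - apply nondecr with (fun y => (Kc y - Gc y) * fc y * mc y); try lra.
      + intros y Hy. apply DW; lra.
      + intros y Hy. rewrite GK by lra. lra.
      + intros y Hy. apply CW; lra. }
  assert (HWb : forall s, a <= s <= T -> Rabs (W s) <= (1 + M) * Qb).
  { intros s Hs. destruct (Rle_lt_dec s b).
    - apply Rle_trans with ((1 + M) * Qp s). apply HW1; lra.
      apply Rmult_le_compat_l. lra. apply Qmono; lra.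
    - rewrite HW2 by lra. apply HW1; lra. }
  assert (Dgc : forall x, 0 < x -> derivable_pt_lim gc x ((0 * (fc x * fc x) - (dfc x * fc x + fc x * dfc x) * 1) / Rsqr (fc x * fc x))).
  { intros x Hx. apply (D_div (fun _ => 1) (fun s => fc s * fc s)). apply D_const. apply D_mult; auto.
    apply Rmult_integral_contrapositive; split; auto. }
  assert (Cgc : forall x, a <= x <= T -> continuity_pt gc x) by (intros; eapply D_cont; apply Dgc; lra).
  assert (gcpos : forall x, 0 < x -> 0 <= gc x).
  { intros x Hx. unfold gc. left. apply Rdiv_lt_0_compat. lra. pose proof (fcpos x Hx). nra. }
  pose (Fp := primitive aT (FTC_P1 aT Cgc)).
  assert (DF : forall x, a <= x <= T -> derivable_pt_lim Fp x (gc x)) by (intros; apply RiemannInt_P28; auto).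
  assert (F0 : Fp a = 0) by apply prim_a.
  assert (HFle : forall s, a <= s <= T -> Fp s <= Iinv).
  { intros s [H1 H2]. unfold Fp. rewrite (prim_val _ _ _ aT (FTC_P1 aT Cgc) s H1 H2).
    destruct (proj1 Hinv s H1) as [prs].
    rewrite (RiemannInt_P18 (FTC_P1 aT Cgc H1 H2) prs).
    - apply improper_ge; auto.
    - try lra.
    - intros x Hx. unfold gc, fc. rewrite Rmax0 by lra. field. apply Rgt_not_eq, fpos; lra. }
  set (P := (1 + M) * Qb) in *.
  assert (P0 : 0 <= P) by (unfold P; apply Rmult_le_pos; lra).
  assert (Hsg : forall s, a <= s <= T -> Rabs (sg s) <= P * Fp s).
  { intros s Hs. apply Rabs_le. split.
    - assert (H := nondecr (fun y => P * Fp y + sg y) (fun y => P * gc y + W y * gc y) a s (proj1 Hs)).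
      simpl in H. rewrite F0, sga in H.
      enough (P * 0 + 0 <= P * Fp s + sg s) by lra.
      apply H.
      + intros y Hy. apply (D_plus (fun y => P * Fp y) sg). apply D_scal, DF; lra. apply Dsg; lra.
      + intros y Hy. pose proof (abs_split _ _ (HWb y ltac:(lra))). pose proof (gcpos y ltac:(lra)). nra.
      + intros y Hy. apply (C_plus (fun y => P * Fp y) sg). apply (C_mult (fun _ => P) Fp). apply C_const.
        eapply D_cont; apply DF; lra. apply Csg; lra.
    - assert (H := nondecr (fun y => P * Fp y - sg y) (fun y => P * gc y - W y * gc y) a s (proj1 Hs)).
      simpl in H. rewrite F0, sga in H.
      enough (P * 0 - 0 <= P * Fp s - sg s) by lra.
      apply H.
      + intros y Hy. apply (D_minus (fun y => P * Fp y) sg). apply D_scal, DF; lra. apply Dsg; lra.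
      + intros y Hy. pose proof (abs_split _ _ (HWb y ltac:(lra))). pose proof (gcpos y ltac:(lra)). nra.
      + intros y Hy. apply (C_minus (fun y => P * Fp y) sg). apply (C_mult (fun _ => P) Fp). apply C_const.
        eapply D_cont; apply DF; lra. apply Csg; lra. }
  assert (HMb : M <= P * Iinv).
  { apply Rle_trans with (P * Fp x0). apply Hsg; auto. apply Rmult_le_compat_l; auto. }
  assert (HQb : Qb <= sqrt Idiff * sqrt Ifour).
  { unfold Qb, Qp. rewrite (prim_val _ _ _ Hab (FTC_P1 Hab Cq) b Hab (Rle_refl b)).
    assert (puu : Riemann_integrable (fun s => Rabs (Gc s - Kc s) ^ 2) a b).
    { apply continuity_implies_RiemannInt; auto. intros; apply C_sq, C_abs, C_minus; [apply CGc|apply CKc]; lra. }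
    assert (pvv : Riemann_integrable (fun s => (fc s * fc s) ^ 2) a b).
    { apply continuity_implies_RiemannInt; auto. intros; apply C_sq, C_mult; apply Cfc; lra. }
    pose proof (CS (fun s => Rabs (Gc s - Kc s)) (fun s => fc s * fc s) a b (FTC_P1 Hab Cq Hab (Rle_refl b)) puu pvv Hab) as Hcs.
    assert (Hvv : RiemannInt pvv = Ifour).
    { destruct Hfour as [pr4 E4]. rewrite <- E4. apply RiemannInt_P18; try lra.
      intros x Hx. unfold fc. rewrite Rmax0 by lra. ring. }
    assert (Huu : RiemannInt puu <= Idiff).
    { destruct (proj1 Hdiff b ltac:(lra)) as [pr0b].
      pose proof (RiemannInt_P23 pr0b (conj (Rlt_le _ _ a0) Hab)) as prab.
      pose proof (RiemannInt_P22 pr0b (conj (Rlt_le _ _ a0) Hab)) as pr0a.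
      pose proof (RiemannInt_P26 pr0a prab pr0b) as E.
      assert (0 <= RiemannInt pr0a) by (apply int_nonneg; [lra|]; intros; apply pow2_ge_0).
      pose proof (improper_ge _ _ _ _ pr0b Hdiff ltac:(intros; apply pow2_ge_0) ltac:(lra)).
      rewrite (RiemannInt_P18 puu prab); [lra|try lra|].
      intros x Hx. unfold Gc, Kc. rewrite Rmax0 by lra. rewrite <- (pow2_abs (G x - K x)). reflexivity. }
    cbv beta in Hcs. rewrite Hvv in Hcs. apply Rle_trans with (1 := Hcs).
    apply Rmult_le_compat_r. apply sqrt_pos. apply sqrt_le_1_alt; auto. }
  assert (HMX : M <= X * (1 + M)).
  { apply Rle_trans with (1 := HMb). unfold P, X, C.
    assert (Qb * Iinv <= Iinv * sqrt Ifour * sqrt Idiff).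
    { rewrite Rmult_comm. rewrite Rmult_assoc. apply Rmult_le_compat_l; auto. lra. }
    nra. }
  apply Rle_trans with M.
  - apply (HM t). lra.
  - apply Hfin; auto.
Qed.
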